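(* In the setting of the Stäckel metric $g$, the integrals $I_2,I_3$, the constants $\lambda,\mu$ and the four real distinct direction fields $\tau_1,\dots,\tau_4$ on an open set $U$ defined by $I_2-\lambda g=I_3-\mu g=0$ (as described in the context), for each $i\in\{1,2,3,4\}$ the 4-web $w_i$ on $U$ formed by the three foliations by coordinate surfaces $x=\mathrm{const}$, $y=\mathrm{const}$, $z=\mathrm{const}$ and the foliation by integral curves of $\tau_i$ has rank at least $2$.
   Context: Let $x,y,z$ be local coordinates and $E,K,P$ functions of $x$ only, $F,L,Q$ functions of $y$ only, $G,M,R$ functions of $z$ only, with $\Delta:=ELR+FMP+GKQ-EMQ-FKR-GLP\neq 0$ and $LR-MQ$, $MP-KR$, $KQ-LP$ nonzero. The metric is $g=\frac{\Delta}{LR-MQ}dx^2+\frac{\Delta}{MP-KR}dy^2+\frac{\Delta}{KQ-LP}dz^2$, and $I_2=\frac{\Delta(GQ-FR)}{(LR-MQ)^2}dx^2+\frac{\Delta(ER-GP)}{(MP-KR)^2}dy^2+\frac{\Delta(FP-EQ)}{(KQ-LP)^2}dz^2$, $I_3=\frac{\Delta(FM-GL)}{(LR-MQ)^2}dx^2+\frac{\Delta(GK-EM)}{(MP-KR)^2}dy^2+\frac{\Delta(EL-FK)}{(KQ-LP)^2}dz^2$, quadratic forms in velocities. Constants $\lambda,\mu$ are such that on $U$ the equations $I_2-\lambda g=I_3-\mu g=0$ define four distinct real points of $PT_mM$ at each $m\in U$, i.e. four direction fields $\tau_1,\dots,\tau_4$. For a web $w$ formed by foliations $\mathcal{F}_1,\dots,\mathcal{F}_d$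 (leaves may have different dimensions), an abelian relation is a $d$-tuple of 1-forms $(\sigma_1,\dots,\sigma_d)$ such that each $\sigma_i$ vanishes on the leaves of $\mathcal{F}_i$, each $\sigma_i$ is closed, and $\sigma_1+\dots+\sigma_d=0$; the rank of $w$ is the dimension of the real vector space of abelian relations. *)

(* Defs.v *)
From Stdlib Require Import Reals Lra List.
From Coquelicot Require Import Coquelicot.
Import ListNotations.
Open Scope R_scope.

Definition fn3 := R -> R -> R -> R.

Record vec3 := Vec3 { vx : R; vy : R; vz : R }.
Definition zero_vec := Vec3 0 0 0.
Definition scale_vec (t : R) (v : vec3) := Vec3 (t * vx v) (t * vy v) (t * vz v).

Definition open3 (U : R -> R -> R -> Prop) : Prop :=
  forall x y z, U x y z -> exists d, d > 0 /\
    forall x' y' z', Rabs (x' - x) < d -> Rabs (y' - y) < d -> Rabs (z' - z) < d ->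
      U x' y' z'.

Definition cont3 (f : fn3) (x y z : R) : Prop :=
  forall eps, eps > 0 -> exists d, d > 0 /\
    forall x' y' z', Rabs (x' - x) < d -> Rabs (y' - y) < d -> Rabs (z' - z) < d ->
      Rabs (f x' y' z' - f x y z) < eps.

Definition pd (i : nat) (f : fn3) : fn3 := fun x y z =>
  match i with
  | O => Derive (fun t => f t y z) x
  | S O => Derive (fun t => f x t z) y
  | _ => Derive (fun t => f x y t) z
  end.

Definition ex_pd (i : nat) (f : fn3) (x y z : R) : Prop :=
  match i with
  | O => ex_derive (fun t => f t y z) x
  | S O => ex_derive (fun t => f x t z) y
  | _ => ex_derive (fun t => f x y t) z
  end.

Definition iter_pd (l : list nat) (f : fn3) : fn3 := fold_right pd f l.

Definition smooth3_on (U : R -> R -> R -> Prop) (f : fn3) : Prop :=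
  forall (l : list nat) x y z, U x y z ->
    cont3 (iter_pd l f) x y z /\ forall i, ex_pd i (iter_pd l f) x y z.

Record oneform := OneForm { fdx : fn3; fdy : fn3; fdz : fn3 }.
Definition zero_form := OneForm (fun _ _ _ => 0) (fun _ _ _ => 0) (fun _ _ _ => 0).

Definition form_at (s : oneform) (x y z : R) (v : vec3) : R :=
  fdx s x y z * vx v + fdy s x y z * vy v + fdz s x y z * vz v.

Definition closed_on (U : R -> R -> R -> Prop) (s : oneform) : Prop :=
  smooth3_on U (fdx s) /\ smooth3_on U (fdy s) /\ smooth3_on U (fdz s) /\
  forall x y z, U x y z ->
    pd 1 (fdx s) x y z = pd 0 (fdy s) x y z /\
    pd 2 (fdx s) x y z = pd 0 (fdz s) x y z /\
    pd 2 (fdy s) x y z = pd 1 (fdz s) x y z.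

(** A foliation is given by its tangent distribution: D x y z v means that
    v is tangent at (x,y,z) to the leaf through that point. *)
Definition foliation := R -> R -> R -> vec3 -> Prop.

Definition fol_x : foliation := fun _ _ _ v => vx v = 0.
Definition fol_y : foliation := fun _ _ _ v => vy v = 0.
Definition fol_z : foliation := fun _ _ _ v => vz v = 0.
Definition line_fol (t1 t2 t3 : fn3) : foliation := fun x y z v =>
  exists c, v = Vec3 (c * t1 x y z) (c * t2 x y z) (c * t3 x y z).

Definition vanishes_on (U : R -> R -> R -> Prop) (D : foliation) (s : oneform) : Prop :=
  forall x y z v, U x y z -> D x y z v -> form_at s x y z v = 0.

Definition abelian_relation (U : R -> R -> R -> Prop) (W : list foliation)
    (S : list oneform) : Prop :=
  length S = length W /\
  List.Forall2 (vanishes_on U) W S /\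
  List.Forall (closed_on U) S /\
  forall x y z v, U x y z ->
    fold_right (fun s acc => form_at s x y z v + acc) 0 S = 0.

Definition lincomb_zero (U : R -> R -> R -> Prop) (cs : list R)
    (rels : list (list oneform)) : Prop :=
  forall (k : nat) x y z v, U x y z ->
    fold_right Rplus 0
      (map (fun p => fst p * form_at (nth k (snd p) zero_form) x y z v)
           (combine cs rels)) = 0.

Definition rank_ge (U : R -> R -> R -> Prop) (W : list foliation) (n : nat) : Prop :=
  exists rels : list (list oneform),
    length rels = n /\
    List.Forall (abelian_relation U W) rels /\
    forall cs : list R, length cs = n -> lincomb_zero U cs rels ->
      List.Forall (fun c => c = 0) cs.

Definition smooth1_at (f : R -> R) (x : R) : Prop := forall n, ex_derive_n f n x.

(** The Staeckel data. E,K,P functions of x; F,L,Q of y; G,M,Rf of z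
    (Rf is the paper's R, renamed to avoid a clash with the reals). *)

Definition stDelta (E K P F L Q G M Rf : R -> R) (x y z : R) : R :=
  E x * L y * Rf z + F y * M z * P x + G z * K x * Q y
  - E x * M z * Q y - F y * K x * Rf z - G z * L y * P x.

Definition den1 (E K P F L Q G M Rf : R -> R) (x y z : R) : R := L y * Rf z - M z * Q y.
Definition den2 (E K P F L Q G M Rf : R -> R) (x y z : R) : R := M z * P x - K x * Rf z.
Definition den3 (E K P F L Q G M Rf : R -> R) (x y z : R) : R := K x * Q y - L y * P x.

Definition gq (E K P F L Q G M Rf : R -> R) (x y z : R) (v : vec3) : R :=
  stDelta E K P F L Q G M Rf x y z / den1 E K P F L Q G M Rf x y z * vx v ^ 2 + stDelta E K P F L Q G M Rf x y z / den2 E K P F L Q G M Rf x y z * vy v ^ 2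
  + stDelta E K P F L Q G M Rf x y z / den3 E K P F L Q G M Rf x y z * vz v ^ 2.

Definition I2q (E K P F L Q G M Rf : R -> R) (x y z : R) (v : vec3) : R :=
  stDelta E K P F L Q G M Rf x y z * (G z * Q y - F y * Rf z) / (den1 E K P F L Q G M Rf x y z) ^ 2 * vx v ^ 2
  + stDelta E K P F L Q G M Rf x y z * (E x * Rf z - G z * P x) / (den2 E K P F L Q G M Rf x y z) ^ 2 * vy v ^ 2
  + stDelta E K P F L Q G M Rf x y z * (F y * P x - E x * Q y) / (den3 E K P F L Q G M Rf x y z) ^ 2 * vz v ^ 2.

Definition I3q (E K P F L Q G M Rf : R -> R) (x y z : R) (v : vec3) : R :=
  stDelta E K P F L Q G M Rf x y z * (F y * M z - G z * L y) / (den1 E K P F L Q G M Rf x y z) ^ 2 * vx v ^ 2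
  + stDelta E K P F L Q G M Rf x y z * (G z * K x - E x * M z) / (den2 E K P F L Q G M Rf x y z) ^ 2 * vy v ^ 2
  + stDelta E K P F L Q G M Rf x y z * (E x * L y - F y * K x) / (den3 E K P F L Q G M Rf x y z) ^ 2 * vz v ^ 2.

(** v (nonzero) represents a point of P T_m M on the conic intersection
    q2 = q3 = 0. *)
Definition proj_sol (q2 q3 : vec3 -> R) (v : vec3) : Prop :=
  v <> zero_vec /\ q2 v = 0 /\ q3 v = 0.

Definition proportional (v w : vec3) : Prop :=
  exists t, t <> 0 /\ w = scale_vec t v.

Definition four_distinct_points (q2 q3 : vec3 -> R) : Prop :=
  exists u1 u2 u3 u4,
    proj_sol q2 q3 u1 /\ proj_sol q2 q3 u2 /\ proj_sol q2 q3 u3 /\ proj_sol q2 q3 u4 /\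
    ~ proportional u1 u2 /\ ~ proportional u1 u3 /\ ~ proportional u1 u4 /\
    ~ proportional u2 u3 /\ ~ proportional u2 u4 /\ ~ proportional u3 u4 /\
    forall v, proj_sol q2 q3 v ->
      proportional u1 v \/ proportional u2 v \/ proportional u3 v \/ proportional u4 v.

(* Main.v *)
Require Import Defs.
From Stdlib Require Import Reals Lra List FunctionalExtensionality.
From Coquelicot Require Import Coquelicot.
Import ListNotations.
Open Scope R_scope.

Definition open1 (V : R -> Prop) := forall x, V x -> exists d, d > 0 /\ forall x', Rabs (x' - x) < d -> V x'.

Fixpoint Cn (V : R -> Prop) (n : nat) (u : R -> R) : Prop :=
  match n with
  | O => True
  | S n => (forall x, V x -> ex_derive u x) /\ Cn V n (Derive u)
  end.

Lemma loc_of (V : R -> Prop) (P : R -> Prop) x : open1 V -> V x -> (forall y, V y -> P y) -> locally x P.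
Proof.
  intros HV Hx HP. destruct (HV x Hx) as [d [Hd H]].
  exists (mkposreal d Hd). intros y Hy. apply HP, H. exact Hy.
Qed.

Lemma Cn_ext V n : open1 V -> forall u v, (forall x, V x -> u x = v x) -> Cn V n u -> Cn V n v.
Proof.
  intros HV. induction n as [|n IH]; simpl; auto.
  intros u v Huv [H1 H2]. split.
  - intros x Hx. apply ex_derive_ext_loc with u; auto. apply (loc_of V); auto.
  - apply IH with (Derive u); auto. intros x Hx. apply Derive_ext_loc. apply (loc_of V); auto.
Qed.

Lemma Cn_S_le V n u : Cn V (S n) u -> Cn V n u.
Proof.
  revert u; induction n as [|n IH]; simpl; auto.
  intros u [H1 [H2 H3]]. split; auto. apply IH. simpl. auto.
Qed.

Lemma Cn_const V n c : open1 V -> Cn V n (fun _ => c).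
Proof.
  intros HV; revert c; induction n as [|n IH]; simpl; auto. intros c. split.
  - intros; apply ex_derive_const.
  - apply Cn_ext with (fun _ => 0); auto. intros; rewrite Derive_const; auto.
Qed.

Lemma Cn_plus V n : open1 V -> forall u v, Cn V n u -> Cn V n v -> Cn V n (fun x => u x + v x).
Proof.
  intros HV; induction n as [|n IH]; simpl; auto.
  intros u v [Hu1 Hu2] [Hv1 Hv2]. split.
  - intros x Hx. apply (ex_derive_plus u v); auto.
  - apply Cn_ext with (fun x => Derive u x + Derive v x); auto.
    intros x Hx. rewrite Derive_plus; auto.
Qed.

Lemma Cn_mult V n : open1 V -> forall u v, Cn V n u -> Cn V n v -> Cn V n (fun x => u x * v x).
Proof.
  intros HV; induction n as [|n IH]; simpl; auto.
  intros u v Hu Hv. pose proof (Cn_S_le _ _ _ Hu) as Hu'. pose proof (Cn_S_le _ _ _ Hv) as Hv'.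
  destruct Hu as [Hu1 Hu2]; destruct Hv as [Hv1 Hv2]. split.
  - intros x Hx. apply ex_derive_mult; auto.
  - apply Cn_ext with (fun x => Derive u x * v x + u x * Derive v x); auto.
    + intros x Hx. rewrite Derive_mult; auto.
    + apply Cn_plus; auto.
Qed.

Lemma Cn_inv V : open1 V -> forall f, (forall n, Cn V n f) -> (forall x, V x -> f x <> 0) ->
  forall n, Cn V n (fun x => / f x).
Proof.
  intros HV f Hf Hnz n; induction n as [|n IH]; simpl; auto.
  destruct (Hf (S n)) as [H1 H2]. split.
  - intros x Hx. apply ex_derive_inv; auto.
  - apply Cn_ext with (fun x => (-1) * Derive f x * (/ f x * / f x)).
    + auto.
    + intros x Hx. rewrite Derive_inv; auto. field. auto.
    + apply Cn_mult; auto. apply Cn_mult; auto. apply Cn_const; auto.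
      apply Cn_mult; auto.
Qed.

Lemma is_derive_isqrt (f : R -> R) (x : R) : ex_derive f x -> f x <> 0 ->
  is_derive (fun t => / sqrt (Rabs (f t))) x ((-/2) * / sqrt (Rabs (f x)) * Derive f x * / f x).
Proof.
  intros Hd Hn.
  assert (Ha : 0 < Rabs (f x)) by (apply Rabs_pos_lt; auto).
  assert (Hs : 0 < sqrt (Rabs (f x))) by (apply sqrt_lt_R0; auto).
  auto_derive.
  - repeat split; auto; lra.
  - assert (Hsq : sqrt (Rabs (f x)) * sqrt (Rabs (f x)) = Rabs (f x)) by (apply sqrt_sqrt; lra).
    set (s := sqrt (Rabs (f x))) in *.
    destruct (Rlt_or_le 0 (f x)) as [Hp|Hp].
    + rewrite (sign_eq_1 _ Hp). rewrite Rabs_pos_eq in Hsq by lra.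
      rewrite <- Hsq. change (Derive (fun x0 : R => f x0) x) with (Derive f x). set (D := Derive f x). field. lra.
    + assert (Hq : f x < 0) by lra. rewrite (sign_eq_m1 _ Hq). rewrite Rabs_left in Hsq by lra.
      change (Derive (fun x0 : R => f x0) x) with (Derive f x). set (D := Derive f x). replace (f x) with (- (s*s)) by lra. field. lra.
Qed.

Lemma Cn_isqrt V : open1 V -> forall f, (forall n, Cn V n f) -> (forall x, V x -> f x <> 0) ->
  forall n, Cn V n (fun x => / sqrt (Rabs (f x))).
Proof.
  intros HV f Hf Hnz n; induction n as [|n IH]; simpl; auto.
  destruct (Hf (S n)) as [H1 H2]. split.
  - intros x Hx. eexists. apply is_derive_isqrt; auto.
  - apply Cn_ext with (fun x => ((-/2) * / sqrt (Rabs (f x))) * (Derive f x * / f x)).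
    + auto.
    + intros x Hx. pose proof (is_derive_unique _ _ _ (is_derive_isqrt f x (H1 x Hx) (Hnz x Hx))) as HH. simpl in HH. rewrite HH. ring.
    + apply Cn_mult; auto. apply Cn_mult; auto. apply Cn_const; auto.
      apply Cn_mult; auto. apply Cn_inv; auto.
Qed.


Lemma Derive_n_S' f n x : Derive_n f (S n) x = Derive_n (Derive f) n x.
Proof.
  replace (S n) with (n + 1)%nat by (rewrite Nat.add_comm; reflexivity).
  rewrite <- (Derive_n_comp f n 1). reflexivity.
Qed.

Lemma Cn_of_smooth V : forall n u, (forall x, V x -> smooth1_at u x) -> Cn V n u.
Proof.
  induction n as [|n IH]; simpl; auto. intros u Hu. split.
  - intros x Hx. exact (Hu x Hx 1%nat).
  - apply IH. intros x Hx k. destruct k as [|k]; simpl; auto.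
    pose proof (Hu x Hx (S (S k))) as H. simpl in H.
    assert (E : Derive_n (Derive u) k = Derive (Derive_n u k)).
    { apply functional_extensionality. intros y. rewrite <- Derive_n_S'. reflexivity. }
    rewrite E. exact H.
Qed.

Lemma Cn_Derive_n V : forall n k u, Cn V (n + k) u -> Cn V k (Derive_n u n).
Proof.
  induction n as [|n IH]; intros k u H.
  - simpl in H. assert (E : Derive_n u 0 = u) by (apply functional_extensionality; reflexivity). rewrite E. exact H.
  - change (Cn V (S (n+k)) u) in H. destruct H as [_ H]. specialize (IH k _ H).
    assert (E : Derive_n u (S n) = Derive_n (Derive u) n).
    { apply functional_extensionality; intros; apply Derive_n_S'. }
    rewrite E. exact IH.
Qed.

Lemma smooth_of_Cn V u : (forall n, Cn V n u) -> forall x, V x -> smooth1_at u x.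
Proof.
  intros H x Hx n. destruct n as [|n]; simpl; auto.
  pose proof (Cn_Derive_n V n 1 u (H _)) as H1. simpl in H1. apply H1; auto.
Qed.

Definition PR (a b c d : R) : Prop := exists t, t <> 0 /\ c = t*a /\ d = t*b.

Lemma PR_of (y1 z1 y2 z2 : R) : z1 <> 0 -> z2 <> 0 -> y1*z2 = y2*z1 -> PR y1 z1 y2 z2.
Proof.
  intros H1 H2 H. exists (z2/z1). split.
  - unfold Rdiv. apply Rmult_integral_contrapositive_currified; auto. apply Rinv_neq_0_compat; auto.
  - split; [|field; auto]. apply (Rmult_eq_reg_r z1); auto. field_simplify; auto. lra.
Qed.

Lemma sq0 (a : R) : a^2 = 0 -> a = 0.
Proof. intros H. nra. Qed.

Lemma pair3 A B y1 z1 y2 z2 y3 z3 : (A <> 0 \/ B <> 0) ->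
  (y1 <> 0 \/ z1 <> 0) -> (y2 <> 0 \/ z2 <> 0) -> (y3 <> 0 \/ z3 <> 0) ->
  A*y1^2 = B*z1^2 -> A*y2^2 = B*z2^2 -> A*y3^2 = B*z3^2 ->
  PR y1 z1 y2 z2 \/ PR y1 z1 y3 z3 \/ PR y2 z2 y3 z3.
Proof.
  intros HAB N1 N2 N3 E1 E2 E3.
  destruct (Req_dec A 0) as [HA|HA].
  - subst A. destruct HAB as [HAB|HB]; [congruence|].
    assert (Z1 : z1 = 0) by (apply sq0; apply (Rmult_eq_reg_l B); auto; lra).
    assert (Z2 : z2 = 0) by (apply sq0; apply (Rmult_eq_reg_l B); auto; lra).
    subst z1 z2. destruct N1 as [N1|N1]; [|congruence]. destruct N2 as [N2|N2]; [|congruence].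
    left. exists (y2/y1). split.
    + unfold Rdiv. apply Rmult_integral_contrapositive_currified; auto. apply Rinv_neq_0_compat; auto.
    + split; [field; auto| ring].
  - assert (Zn : forall y z, (y <> 0 \/ z <> 0) -> A*y^2 = B*z^2 -> z <> 0).
    { intros y z N E Hz. subst z. destruct N as [N|N]; [|congruence].
      apply N, sq0. apply (Rmult_eq_reg_l A); auto. lra. }
    pose proof (Zn _ _ N1 E1) as Z1. pose proof (Zn _ _ N2 E2) as Z2. pose proof (Zn _ _ N3 E3) as Z3.
    assert (K : forall ya za yb zb, A*ya^2 = B*za^2 -> A*yb^2 = B*zb^2 ->
                 ya*zb = yb*za \/ ya*zb = - (yb*za)).
    { intros ya za yb zb Ea Eb.
      assert (H : A * ((ya*zb - yb*za)*(ya*zb + yb*za)) = 0).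
      { replace (A * ((ya*zb - yb*za)*(ya*zb + yb*za))) with ((A*ya^2)*zb^2 - (A*yb^2)*za^2) by ring.
        rewrite Ea, Eb. ring. }
      apply Rmult_integral in H. destruct H as [H|H]; [congruence|].
      apply Rmult_integral in H. destruct H as [H|H]; [left; lra | right; lra]. }
    destruct (K _ _ _ _ E1 E2) as [H12|H12]. { left. apply PR_of; auto. }
    destruct (K _ _ _ _ E1 E3) as [H13|H13]. { right; left. apply PR_of; auto. }
    right; right. apply PR_of; auto.
    apply (Rmult_eq_reg_l z1); auto.
    replace (z1 * (y2 * z3)) with (z3 * (y2 * z1)) by ring.
    replace (z1 * (y3 * z2)) with (z2 * (y3 * z1)) by ring.
    replace (y2 * z1) with (- (y1 * z2)) by lra. replace (y3 * z1) with (- (y1 * z3)) by lra. ring.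
Qed.

Lemma Xzero dl d a : dl <> 0 -> d <> 0 -> dl * (dl * a^2 / d^2) = 0 -> a = 0.
Proof.
  intros H1 H2 H. apply sq0.
  assert (E : dl * (dl * a^2 / d^2) = (dl * dl / d^2) * a^2) by (field; auto).
  rewrite E in H. apply Rmult_integral in H. destruct H as [H|H]; auto.
  exfalso. assert (dl * dl / d^2 <> 0).
  { unfold Rdiv. apply Rmult_integral_contrapositive_currified.
    apply Rmult_integral_contrapositive_currified; auto. apply Rinv_neq_0_compat. apply pow_nonzero; auto. }
  auto.
Qed.

Lemma gen_nz (S : vec3 -> Prop) (pa pb pc : vec3 -> R) (dl da db dc fa fb fc : R) :
  dl <> 0 -> da <> 0 -> db <> 0 -> dc <> 0 ->
  (forall v w t, pa w = t * pa v -> pb w = t * pb v -> pc w = t * pc v -> w = scale_vec t v) ->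
  (forall v, pa v = 0 -> pb v = 0 -> pc v = 0 -> v = zero_vec) ->
  (forall v, S v -> v <> zero_vec /\ exists s, dl*(dl*pa v^2/da^2) = s*fa /\
      dl*(dl*pb v^2/db^2) = s*fb /\ dl*(dl*pc v^2/dc^2) = s*fc) ->
  (exists u1 u2 u3, S u1 /\ S u2 /\ S u3 /\ ~ proportional u1 u2 /\ ~ proportional u1 u3 /\
      ~ proportional u2 u3) -> fa <> 0.
Proof.
  intros Hdl Hda Hdb Hdc Hsc Hz HS [u1 [u2 [u3 [S1 [S2 [S3 [N12 [N13 N23]]]]]]]] Hfa.
  set (A := dl * fc / db^2). set (B := dl * fb / dc^2).
  assert (Hpa : forall v, S v -> pa v = 0).
  { intros v Sv. destruct (HS v Sv) as [_ [s [E1 _]]]. apply (Xzero dl da); auto.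
    rewrite E1, Hfa. ring. }
  assert (Heq : forall v, S v -> A * pb v ^ 2 = B * pc v ^ 2).
  { intros v Sv. destruct (HS v Sv) as [_ [s [_ [E2 E3]]]].
    apply (Rmult_eq_reg_l dl); auto.
    replace (dl * (A * pb v ^ 2)) with (fc * (dl * (dl * pb v ^ 2 / db ^ 2))) by (unfold A; field; auto).
    replace (dl * (B * pc v ^ 2)) with (fb * (dl * (dl * pc v ^ 2 / dc ^ 2))) by (unfold B; field; auto).
    rewrite E2, E3. ring. }
  assert (Hnz : forall v, S v -> pb v <> 0 \/ pc v <> 0).
  { intros v Sv. destruct (Req_dec (pb v) 0) as [Hb|Hb]; auto.
    destruct (Req_dec (pc v) 0) as [Hc|Hc]; auto.
    exfalso. destruct (HS v Sv) as [Hv _]. apply Hv, Hz; auto. }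
  assert (HAB : A <> 0 \/ B <> 0).
  { destruct (Req_dec A 0) as [HA|HA]; auto. destruct (Req_dec B 0) as [HB|HB]; auto.
    exfalso.
    assert (Hfc : fc = 0).
    { unfold A in HA. unfold Rdiv in HA. apply Rmult_integral in HA. destruct HA as [HA|HA].
      - apply Rmult_integral in HA. destruct HA; auto. congruence.
      - exfalso. revert HA. apply Rinv_neq_0_compat. apply pow_nonzero; auto. }
    assert (Hfb : fb = 0).
    { unfold B in HB. unfold Rdiv in HB. apply Rmult_integral in HB. destruct HB as [HB|HB].
      - apply Rmult_integral in HB. destruct HB; auto. congruence.
      - exfalso. revert HB. apply Rinv_neq_0_compat. apply pow_nonzero; auto. }
    destruct (HS u1 S1) as [Hv [s [E1 [E2 E3]]]]. apply Hv, Hz.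
    - apply (Xzero dl da); auto. rewrite E1, Hfa; ring.
    - apply (Xzero dl db); auto. rewrite E2, Hfb; ring.
    - apply (Xzero dl dc); auto. rewrite E3, Hfc; ring. }
  assert (Ptop : forall a b, S a -> S b -> PR (pb a) (pc a) (pb b) (pc b) -> proportional a b).
  { intros a b Sa Sb [t [Ht [E1 E2]]]. exists t. split; auto. apply Hsc; auto.
    rewrite (Hpa a Sa), (Hpa b Sb). ring. }
  destruct (pair3 A B _ _ _ _ _ _ HAB (Hnz _ S1) (Hnz _ S2) (Hnz _ S3) (Heq _ S1) (Heq _ S2) (Heq _ S3))
    as [H|[H|H]].
  - apply N12, Ptop; auto.
  - apply N13, Ptop; auto.
  - apply N23, Ptop; auto.
Qed.

Section Alg.
Variables (e k p f l q g m r lam mu : R).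
Let dl := e*l*r + f*m*p + g*k*q - e*m*q - f*k*r - g*l*p.
Let d1 := l*r - m*q.
Let d2 := m*p - k*r.
Let d3 := k*q - l*p.
Let f1 := e + lam*k + mu*p.
Let f2 := f + lam*l + mu*q.
Let f3 := g + lam*m + mu*r.
Definition Q2r (v : vec3) : R :=
  (dl*(g*q - f*r)/d1^2 * vx v ^ 2 + dl*(e*r - g*p)/d2^2 * vy v ^ 2 + dl*(f*p - e*q)/d3^2 * vz v ^ 2)
  - lam * (dl/d1 * vx v ^ 2 + dl/d2 * vy v ^ 2 + dl/d3 * vz v ^ 2).
Definition Q3r (v : vec3) : R :=
  (dl*(f*m - g*l)/d1^2 * vx v ^ 2 + dl*(g*k - e*m)/d2^2 * vy v ^ 2 + dl*(e*l - f*k)/d3^2 * vz v ^ 2)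
  - mu * (dl/d1 * vx v ^ 2 + dl/d2 * vy v ^ 2 + dl/d3 * vz v ^ 2).

Hypotheses (Hdl : dl <> 0) (Hd1 : d1 <> 0) (Hd2 : d2 <> 0) (Hd3 : d3 <> 0).

Lemma solX (v : vec3) : Q2r v = 0 -> Q3r v = 0 ->
  let X1 := dl * vx v ^ 2 / d1 ^ 2 in let X2 := dl * vy v ^ 2 / d2 ^ 2 in
  let X3 := dl * vz v ^ 2 / d3 ^ 2 in let s := d1*X1 + d2*X2 + d3*X3 in
  dl * X1 = s * f1 /\ dl * X2 = s * f2 /\ dl * X3 = s * f3.
Proof.
  intros H2 H3 X1 X2 X3 s.
  assert (A : (g*q - f*r)*X1 + (e*r - g*p)*X2 + (f*p - e*q)*X3 - lam * s = 0).
  { rewrite <- H2. unfold Q2r, s, X1, X2, X3. field. auto. }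
  assert (B : (f*m - g*l)*X1 + (g*k - e*m)*X2 + (e*l - f*k)*X3 - mu * s = 0).
  { rewrite <- H3. unfold Q3r, s, X1, X2, X3. field. auto. }
  clearbody X1 X2 X3. subst s.
  set (a := (g*q - f*r)*X1 + (e*r - g*p)*X2 + (f*p - e*q)*X3 - lam * (d1*X1 + d2*X2 + d3*X3)) in A.
  set (b := (f*m - g*l)*X1 + (g*k - e*m)*X2 + (e*l - f*k)*X3 - mu * (d1*X1 + d2*X2 + d3*X3)) in B.
  assert (E1 : dl * X1 - (d1*X1 + d2*X2 + d3*X3) * f1 = k*a + p*b)
    by (unfold a, b, dl, d1, d2, d3, f1; ring).
  assert (E2 : dl * X2 - (d1*X1 + d2*X2 + d3*X3) * f2 = l*a + q*b)
    by (unfold a, b, dl, d1, d2, d3, f2; ring).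
  assert (E3 : dl * X3 - (d1*X1 + d2*X2 + d3*X3) * f3 = m*a + r*b)
    by (unfold a, b, dl, d1, d2, d3, f3; ring).
  rewrite A, B in *. repeat split; lra.
Qed.

Lemma sol_facts v : proj_sol Q2r Q3r v -> v <> zero_vec /\ exists s,
  dl*(dl*vx v^2/d1^2) = s*f1 /\ dl*(dl*vy v^2/d2^2) = s*f2 /\ dl*(dl*vz v^2/d3^2) = s*f3.
Proof.
  intros [Hv [H2 H3]]. split; auto. pose proof (solX v H2 H3) as H. simpl in H.
  eexists. exact H.
Qed.

Lemma sq_rel a d fi s : d <> 0 -> dl*(dl*a^2/d^2) = s*fi ->
  a^2 = (Rabs s / dl^2) * d^2 * Rabs fi.
Proof.
  intros Hd E.
  assert (P1 : a^2 = s*fi*d^2/dl^2).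
  { rewrite <- E. field. split; auto. }
  assert (P2 : 0 <= s*fi).
  { rewrite <- E. replace (dl * (dl * a ^ 2 / d ^ 2)) with ((dl/d)^2 * a^2) by (field; auto).
    apply Rmult_le_pos; apply pow2_ge_0. }
  rewrite P1. replace (Rabs s / dl ^ 2 * d ^ 2 * Rabs fi) with (Rabs (s*fi) * d^2 / dl^2)
    by (rewrite Rabs_mult; field; auto).
  rewrite (Rabs_pos_eq _ P2). reflexivity.
Qed.

Lemma point_main (t : vec3) : four_distinct_points Q2r Q3r -> proj_sol Q2r Q3r t ->
  f1 <> 0 /\ f2 <> 0 /\ f3 <> 0 /\ vx t <> 0 /\ vy t <> 0 /\ vz t <> 0 /\
  exists c, vx t ^ 2 = c * d1^2 * Rabs f1 /\ vy t ^ 2 = c * d2^2 * Rabs f2 /\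
            vz t ^ 2 = c * d3^2 * Rabs f3.
Proof.
  intros H4 Ht.
  assert (U3 : exists u1 u2 u3, proj_sol Q2r Q3r u1 /\ proj_sol Q2r Q3r u2 /\ proj_sol Q2r Q3r u3 /\
      ~ proportional u1 u2 /\ ~ proportional u1 u3 /\ ~ proportional u2 u3).
  { destruct H4 as [u1 [u2 [u3 [u4 [S1 [S2 [S3 [S4 [N12 [N13 [N14 [N23 _]]]]]]]]]]]].
    exists u1, u2, u3. tauto. }
  assert (Hf1 : f1 <> 0).
  { apply (gen_nz (proj_sol Q2r Q3r) vx vy vz dl d1 d2 d3 f1 f2 f3); auto.
    - intros [a b c] [a' b' c'] t0; simpl; intros -> -> ->; reflexivity.
    - intros [a b c]; simpl; intros -> -> ->; reflexivity.
    - exact sol_facts. }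
  assert (Hf2 : f2 <> 0).
  { apply (gen_nz (proj_sol Q2r Q3r) vy vx vz dl d2 d1 d3 f2 f1 f3); auto.
    - intros [a b c] [a' b' c'] t0; simpl; intros -> -> ->; reflexivity.
    - intros [a b c]; simpl; intros -> -> ->; reflexivity.
    - intros v Sv. destruct (sol_facts v Sv) as [Hv [s [E1 [E2 E3]]]]. split; auto. exists s. auto. }
  assert (Hf3 : f3 <> 0).
  { apply (gen_nz (proj_sol Q2r Q3r) vz vx vy dl d3 d1 d2 f3 f1 f2); auto.
    - intros [a b c] [a' b' c'] t0; simpl; intros -> -> ->; reflexivity.
    - intros [a b c]; simpl; intros -> -> ->; reflexivity.
    - intros v Sv. destruct (sol_facts v Sv) as [Hv [s [E1 [E2 E3]]]]. split; auto. exists s. auto. }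
  destruct (sol_facts t Ht) as [Hv [s [E1 [E2 E3]]]].
  assert (Hs : s <> 0).
  { intros Hs. subst s. apply Hv. destruct t as [a b c]. cbn [vx vy vz] in *.
    assert (a = 0) by (apply (Xzero dl d1); auto; rewrite E1; ring).
    assert (b = 0) by (apply (Xzero dl d2); auto; rewrite E2; ring).
    assert (c = 0) by (apply (Xzero dl d3); auto; rewrite E3; ring).
    subst; reflexivity. }
  assert (Nz : forall a d fi, d <> 0 -> fi <> 0 -> dl*(dl*a^2/d^2) = s*fi -> a <> 0).
  { intros a d fi Hd Hfi E Ha. subst a. assert (s * fi = 0) by (rewrite <- E; field; auto).
    apply Rmult_integral in H. tauto. }
  repeat split; auto.
  - apply (Nz _ d1 f1); auto.
  - apply (Nz _ d2 f2); auto.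
  - apply (Nz _ d3 f3); auto.
  - exists (Rabs s / dl^2). repeat split; apply sq_rel; auto.
Qed.

End Alg.

Definition idx (j : nat) : nat := match j with 0 => 0 | 1 => 1 | _ => 2 end%nat.
Definition cj (j : nat) (x y z : R) : R := match j with 0 => x | 1 => y | _ => z end%nat.

Definition Hl (i : nat) (h : R -> R) (l : list nat) : R -> R :=
  if forallb (fun j => Nat.eqb (idx j) (idx i)) l then Derive_n h (length l) else fun _ => 0.

Lemma Hl_same i h j l t : idx j = idx i -> Hl i h (j :: l) t = Derive (Hl i h l) t.
Proof.
  intros E. unfold Hl. simpl. rewrite E, Nat.eqb_refl. simpl.
  destruct (forallb _ l); simpl; auto. rewrite Derive_const; auto.
Qed.

Lemma Hl_diff i h j l t : idx j <> idx i -> Hl i h (j :: l) t = 0.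
Proof.
  intros E. unfold Hl. simpl. apply Nat.eqb_neq in E. rewrite E. simpl. reflexivity.
Qed.

Lemma Hl_ex i h l a : smooth1_at h a -> ex_derive (Hl i h l) a.
Proof.
  intros H. unfold Hl. destruct (forallb _ l).
  - exact (H (S (length l))).
  - apply ex_derive_const.
Qed.

Lemma loc_box (a d : R) (P : R -> Prop) : d > 0 -> (forall t, Rabs (t - a) < d -> P t) -> locally a P.
Proof. intros Hd H. exists (mkposreal d Hd). intros t Ht. apply H. exact Ht. Qed.

Lemma cont_eps (f : R -> R) a : continuous f a -> forall eps, eps > 0 -> exists d, d > 0 /\
  forall t, Rabs (t - a) < d -> Rabs (f t - f a) < eps.
Proof.
  intros Hc eps He. destruct (proj1 (filterlim_locally f (f a)) Hc (mkposreal eps He)) as [d Hd].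
  exists d. split. apply cond_pos. intros t Ht. apply (Hd t Ht).
Qed.

Definition locconst (U : R -> R -> R -> Prop) (s : fn3) : Prop :=
  forall x y z, U x y z -> exists d, d > 0 /\ forall x' y' z',
    Rabs (x' - x) < d -> Rabs (y' - y) < d -> Rabs (z' - z) < d ->
    U x' y' z' /\ s x' y' z' = s x y z.

Lemma R0d d : d > 0 -> forall a, Rabs (a - a) < d.
Proof. intros. replace (a - a) with 0 by ring. rewrite Rabs_R0. lra. Qed.

Section Sep.
Variables (U : R -> R -> R -> Prop) (i : nat) (h : R -> R) (s : fn3).
Hypothesis Hloc : locconst U s.
Hypothesis Hsm : forall x y z, U x y z -> smooth1_at h (cj i x y z).
Let F : fn3 := fun x y z => s x y z * h (cj i x y z).

Lemma sepA : forall l x y z, U x y z -> iter_pd l F x y z = s x y z * Hl i h l (cj i x y z).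
Proof.
  induction l as [|j l IH]; intros x y z Hu.
  - simpl. unfold F, Hl. simpl. reflexivity.
  - destruct (Hloc x y z Hu) as [d [Hd Hbox]].
    assert (key : forall x' y' z', Rabs (x' - x) < d -> Rabs (y' - y) < d -> Rabs (z' - z) < d ->
        iter_pd l F x' y' z' = s x y z * Hl i h l (cj i x' y' z')).
    { intros x' y' z' H1 H2 H3. destruct (Hbox x' y' z' H1 H2 H3) as [Hu' Hs'].
      rewrite IH by exact Hu'. rewrite Hs'. reflexivity. }
    pose proof (R0d d Hd) as Z.
    change (iter_pd (j :: l) F x y z) with (pd j (iter_pd l F) x y z).
    destruct (Nat.eq_dec (idx j) (idx i)) as [Heq|Hne].
    + rewrite Hl_same by exact Heq.
      destruct j as [|[|j]]; destruct i as [|[|i0]]; simpl in Heq; try discriminate; simpl.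
      * rewrite (Derive_ext_loc _ (fun t => s x y z * Hl 0 h l t)).
        apply Derive_scal. apply (loc_box _ d); [exact Hd|intros t Ht; apply key; auto].
      * rewrite (Derive_ext_loc _ (fun t => s x y z * Hl 1 h l t)).
        apply Derive_scal. apply (loc_box _ d); [exact Hd|intros t Ht; apply key; auto].
      * rewrite (Derive_ext_loc _ (fun t => s x y z * Hl (S (S i0)) h l t)).
        apply Derive_scal. apply (loc_box _ d); [exact Hd|intros t Ht; apply key; auto].
    + rewrite Hl_diff by exact Hne. rewrite Rmult_0_r.
      set (H0 := Hl i h l) in *. clearbody H0.
      destruct j as [|[|j]]; simpl;
      (rewrite (Derive_ext_loc _ (fun _ => s x y z * H0 (cj i x y z))); [apply Derive_const|]);
      apply (loc_box _ d); (try exact Hd); intros t Ht; rewrite key by auto;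
      destruct i as [|[|i0]]; simpl in Hne |- *; try congruence; reflexivity.
Qed.

Lemma sepB : forall l x y z, U x y z -> forall j, ex_pd j (iter_pd l F) x y z.
Proof.
  intros l x y z Hu j.
  destruct (Hloc x y z Hu) as [d [Hd Hbox]].
  assert (key : forall x' y' z', Rabs (x' - x) < d -> Rabs (y' - y) < d -> Rabs (z' - z) < d ->
      iter_pd l F x' y' z' = s x y z * Hl i h l (cj i x' y' z')).
  { intros x' y' z' H1 H2 H3. destruct (Hbox x' y' z' H1 H2 H3) as [Hu' Hs'].
    rewrite sepA by exact Hu'. rewrite Hs'. reflexivity. }
  pose proof (R0d d Hd) as Z. pose proof (Hsm x y z Hu) as Hs.
  assert (HexH : ex_derive (Hl i h l) (cj i x y z)) by (apply Hl_ex; auto).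
  set (H0 := Hl i h l) in *. clearbody H0.
  destruct j as [|[|j]]; destruct i as [|[|i0]]; simpl; simpl in HexH;
  [ apply (ex_derive_ext_loc (fun t => s x y z * H0 t))
  | apply (ex_derive_ext_loc (fun t => s x y z * H0 y))
  | apply (ex_derive_ext_loc (fun t => s x y z * H0 z))
  | apply (ex_derive_ext_loc (fun t => s x y z * H0 x))
  | apply (ex_derive_ext_loc (fun t => s x y z * H0 t))
  | apply (ex_derive_ext_loc (fun t => s x y z * H0 z))
  | apply (ex_derive_ext_loc (fun t => s x y z * H0 x))
  | apply (ex_derive_ext_loc (fun t => s x y z * H0 y))
  | apply (ex_derive_ext_loc (fun t => s x y z * H0 t)) ];
  try (apply (loc_box _ d); [exact Hd| intros t Ht; symmetry; apply key; auto]);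
  try apply ex_derive_const;
  apply ex_derive_scal; auto.
Qed.

Lemma sepC : forall l x y z, U x y z -> cont3 (iter_pd l F) x y z.
Proof.
  intros l x y z Hu eps He.
  destruct (Hloc x y z Hu) as [d [Hd Hbox]].
  set (c := s x y z).
  assert (key : forall x' y' z', Rabs (x' - x) < d -> Rabs (y' - y) < d -> Rabs (z' - z) < d ->
      iter_pd l F x' y' z' = c * Hl i h l (cj i x' y' z')).
  { intros x' y' z' H1 H2 H3. destruct (Hbox x' y' z' H1 H2 H3) as [Hu' Hs'].
    rewrite sepA by exact Hu'. rewrite Hs'. reflexivity. }
  pose proof (R0d d Hd) as Z.
  assert (Hc : continuous (Hl i h l) (cj i x y z)).
  { exact (ex_derive_continuous (V := R_NormedModule) (Hl i h l) _ (Hl_ex i h l _ (Hsm x y z Hu))). }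
  assert (Hca : Rabs c + 1 > 0) by (pose proof (Rabs_pos c); lra).
  destruct (cont_eps _ _ Hc (eps / (Rabs c + 1))) as [d1 [Hd1 Hcont]].
  { apply Rdiv_lt_0_compat; lra. }
  exists (Rmin d d1). split. { apply Rmin_glb_lt; auto. }
  intros x' y' z' H1 H2 H3.
  pose proof (Rmin_l d d1). pose proof (Rmin_r d d1).
  rewrite (key x' y' z') by lra. rewrite (key x y z) by auto.
  assert (Hcj : Rabs (cj i x' y' z' - cj i x y z) < d1).
  { destruct i as [|[|i0]]; simpl; lra. }
  specialize (Hcont _ Hcj).
  rewrite <- Rmult_minus_distr_l, Rabs_mult.
  apply Rle_lt_trans with (Rabs c * (eps / (Rabs c + 1))).
  { apply Rmult_le_compat_l. apply Rabs_pos. lra. }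
  apply Rlt_le_trans with ((Rabs c + 1) * (eps / (Rabs c + 1))).
  { apply Rmult_lt_compat_r. apply Rdiv_lt_0_compat; lra. lra. }
  right. field. lra.
Qed.

Lemma sep_smooth : smooth3_on U F.
Proof. intros l x y z Hu. split. apply sepC; auto. apply sepB; auto. Qed.

End Sep.

Definition F3 (f:fn3) : R*(R*R) -> R := fun p => f (fst p) (fst (snd p)) (snd (snd p)).
Lemma to_c f x y z : cont3 f x y z -> continuous (F3 f) (x,(y,z)).
Proof.
  intros H. unfold continuous. apply filterlim_locally. intros eps.
  destruct (H eps (cond_pos eps)) as [d [Hd H']]. exists (mkposreal d Hd).
  intros [a [b c]] [H1 [H2 H3]]. apply H'; assumption.
Qed.
Lemma of_c f x y z : continuous (F3 f) (x,(y,z)) -> cont3 f x y z.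
Proof.
  intros H eps He. destruct (proj1 (filterlim_locally _ _) H (mkposreal eps He)) as [d Hd].
  exists d. split. apply cond_pos. intros a b c H1 H2 H3. apply (Hd (a,(b,c))). split; [|split]; assumption.
Qed.
Lemma cont3_mult f g x y z : cont3 f x y z -> cont3 g x y z -> cont3 (fun x y z => f x y z * g x y z) x y z.
Proof. intros H1 H2. apply of_c. exact (continuous_mult _ _ _ (to_c _ _ _ _ H1) (to_c _ _ _ _ H2)). Qed.
Lemma cont3_minus f g x y z : cont3 f x y z -> cont3 g x y z -> cont3 (fun x y z => f x y z - g x y z) x y z.
Proof. intros H1 H2. apply of_c. exact (continuous_minus _ _ _ (to_c _ _ _ _ H1) (to_c _ _ _ _ H2)). Qed.

Definition sg (r : R) : R := if Rlt_dec 0 r then 1 else -1.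

Lemma sg_nz r : sg r <> 0.
Proof. unfold sg; destruct (Rlt_dec 0 r); lra. Qed.

Lemma sg_locconst (U : R -> R -> R -> Prop) (g : fn3) : open3 U ->
  (forall x y z, U x y z -> cont3 g x y z /\ g x y z <> 0) ->
  locconst U (fun x y z => sg (g x y z)).
Proof.
  intros HU Hg x y z Hu. destruct (Hg x y z Hu) as [Hc Hn].
  destruct (HU x y z Hu) as [d1 [Hd1 H1]].
  destruct (Hc (Rabs (g x y z))) as [d2 [Hd2 H2]]. { apply Rabs_pos_lt; auto. }
  exists (Rmin d1 d2). split. { apply Rmin_glb_lt; auto. }
  intros x' y' z' E1 E2 E3. pose proof (Rmin_l d1 d2). pose proof (Rmin_r d1 d2).
  split. { apply H1; lra. }
  assert (Hd : Rabs (g x' y' z' - g x y z) < Rabs (g x y z)) by (apply H2; lra).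
  unfold sg. destruct (Rlt_dec 0 (g x y z)) as [Hp|Hp].
  - rewrite (Rabs_pos_eq (g x y z)) in Hd by lra. apply Rabs_def2 in Hd.
    destruct (Rlt_dec 0 (g x' y' z')); auto; lra.
  - assert (g x y z < 0) by (destruct (Rtotal_order (g x y z) 0) as [?|[?|?]]; auto; lra).
    rewrite (Rabs_left (g x y z)) in Hd by lra. apply Rabs_def2 in Hd.
    destruct (Rlt_dec 0 (g x' y' z')); auto; lra.
Qed.

Lemma locconst_opp U s : locconst U s -> locconst U (fun x y z => - s x y z).
Proof.
  intros H x y z Hu. destruct (H x y z Hu) as [d [Hd H']]. exists d. split; auto.
  intros x' y' z' E1 E2 E3. destruct (H' x' y' z' E1 E2 E3) as [A B]. rewrite B. auto.
Qed.

Definition zf : fn3 := fun _ _ _ => 0.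

Lemma pd_zero j x y z : pd j zf x y z = 0.
Proof. destruct j as [|[|j]]; unfold zf; simpl; apply Derive_const. Qed.

Lemma iter_zero l : iter_pd l zf = zf.
Proof.
  induction l as [|j l IH]; simpl; auto. rewrite IH.
  apply functional_extensionality; intros x. apply functional_extensionality; intros y.
  apply functional_extensionality; intros z. apply pd_zero.
Qed.

Lemma smooth_zero U : smooth3_on U zf.
Proof.
  intros l x y z Hu. rewrite iter_zero. split.
  - intros eps He. exists 1. split. lra. intros. unfold zf. rewrite Rminus_0_r, Rabs_R0. auto.
  - intros j. destruct j as [|[|j]]; unfold zf; simpl; apply ex_derive_const.
Qed.

Lemma sep_pd0 U i h s j x y z : locconst U s ->
  (forall x y z, U x y z -> smooth1_at h (cj i x y z)) -> idx j <> idx i -> U x y z ->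
  pd j (fun x y z => s x y z * h (cj i x y z)) x y z = 0.
Proof.
  intros Hl Hs Hj Hu. pose proof (sepA U i h s Hl Hs [j] x y z Hu) as H. simpl in H.
  rewrite H. rewrite Hl_diff by exact Hj. ring.
Qed.

Lemma rel_lemma U t1 t2 t3 a b c a' b' c' :
  smooth3_on U a -> smooth3_on U b -> smooth3_on U c ->
  smooth3_on U a' -> smooth3_on U b' -> smooth3_on U c' ->
  (forall x y z, U x y z -> pd 1 a x y z = 0 /\ pd 2 a x y z = 0 /\ pd 1 a' x y z = 0 /\ pd 2 a' x y z = 0) ->
  (forall x y z, U x y z -> pd 0 b x y z = 0 /\ pd 2 b x y z = 0 /\ pd 0 b' x y z = 0 /\ pd 2 b' x y z = 0) ->
  (forall x y z, U x y z -> pd 0 c x y z = 0 /\ pd 1 c x y z = 0 /\ pd 0 c' x y z = 0 /\ pd 1 c' x y z = 0) ->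
  (forall x y z, U x y z -> a' x y z = - a x y z /\ b' x y z = - b x y z /\ c' x y z = - c x y z) ->
  (forall x y z, U x y z -> a x y z * t1 x y z + b x y z * t2 x y z + c x y z * t3 x y z = 0) ->
  abelian_relation U [fol_x; fol_y; fol_z; line_fol t1 t2 t3]
    [OneForm a zf zf; OneForm zf b zf; OneForm zf zf c; OneForm a' b' c'].
Proof.
  intros Sa Sb Sc Sa' Sb' Sc' Pa Pb Pc Neg Rel.
  split; [reflexivity|]. split; [|split].
  - repeat constructor; intros x y z v Hu Hv; unfold form_at; simpl; unfold zf.
    + unfold fol_x in Hv. rewrite Hv. ring.
    + unfold fol_y in Hv. rewrite Hv. ring.
    + unfold fol_z in Hv. rewrite Hv. ring.
    + destruct Hv as [k Hv]. subst v. simpl.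
      destruct (Neg x y z Hu) as [N1 [N2 N3]]. rewrite N1, N2, N3.
      pose proof (Rel x y z Hu). 
      replace (- a x y z * (k * t1 x y z) + - b x y z * (k * t2 x y z) + - c x y z * (k * t3 x y z))
        with (- k * (a x y z * t1 x y z + b x y z * t2 x y z + c x y z * t3 x y z)) by ring.
      rewrite H. ring.
  - assert (Z := smooth_zero U).
    apply Forall_cons; [|apply Forall_cons; [|apply Forall_cons; [|apply Forall_cons; [|apply Forall_nil]]]];
      (split; [|split; [|split]]); cbn [fdx fdy fdz]; auto; intros x y z Hu; rewrite ?pd_zero;
      destruct (Pa x y z Hu) as [A1 [A2 [A3 A4]]];
      destruct (Pb x y z Hu) as [B1 [B2 [B3 B4]]];
      destruct (Pc x y z Hu) as [C1 [C2 [C3 C4]]];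
      repeat split; congruence.
  - intros x y z v Hu. simpl. unfold form_at; simpl; unfold zf.
    destruct (Neg x y z Hu) as [N1 [N2 N3]]. rewrite N1, N2, N3. ring.
Qed.

Lemma key_id (t D f c k : R) : t <> 0 -> D <> 0 -> f <> 0 -> t^2 = c*D^2*Rabs f ->
  sg (t*D) * (k * / sqrt (Rabs f)) * t = k * D * sqrt c.
Proof.
  intros Ht HD Hf E.
  assert (Hfa : 0 < Rabs f) by (apply Rabs_pos_lt; auto).
  assert (HD2 : 0 < D^2) by (apply pow2_gt_0; auto).
  assert (Hc : 0 <= c).
  { destruct (Rle_or_lt 0 c) as [?|Hc]; auto. exfalso.
    assert (0 < t^2) by (apply pow2_gt_0; auto).
    assert (c * D^2 * Rabs f < 0).
    { replace (c * D^2 * Rabs f) with (- ((-c) * D^2 * Rabs f)) by ring.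
      assert (0 < (-c) * D^2 * Rabs f) by (apply Rmult_lt_0_compat; [apply Rmult_lt_0_compat|]; lra).
      lra. }
    lra. }
  assert (Habs : Rabs t = sqrt c * Rabs D * sqrt (Rabs f)).
  { rewrite <- sqrt_Rsqr_abs. unfold Rsqr. replace (t*t) with (t^2) by ring. rewrite E.
    rewrite sqrt_mult; [|apply Rmult_le_pos; lra | lra].
    rewrite sqrt_mult; [|lra|lra].
    replace (D^2) with (Rsqr D) by (unfold Rsqr; ring). rewrite sqrt_Rsqr_abs. reflexivity. }
  assert (Hs : 0 < sqrt (Rabs f)) by (apply sqrt_lt_R0; auto).
  assert (HDa : 0 < Rabs D) by (apply Rabs_pos_lt; auto).
  assert (Hsg : sg (t*D) * t = Rabs t * D / Rabs D).
  { unfold sg. destruct (Rlt_dec 0 (t*D)) as [Hp|Hp].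
    - destruct (Rlt_or_le 0 t) as [Ht'|Ht'].
      + assert (0 < D) by (destruct (Rlt_or_le 0 D); auto; nra).
        rewrite !Rabs_pos_eq by lra. field. lra.
      + assert (D < 0) by (destruct (Rlt_or_le D 0); auto; nra).
        rewrite (Rabs_left t) by lra. rewrite (Rabs_left D) by lra. field. lra.
    - destruct (Rlt_or_le 0 t) as [Ht'|Ht'].
      + assert (D < 0) by (destruct (Rlt_or_le D 0) as [?|HH]; auto; destruct HH as [HH|HH]; [nra|congruence]).
        rewrite (Rabs_pos_eq t) by lra. rewrite (Rabs_left D) by lra. field. lra.
      + assert (0 < D) by (destruct (Rlt_or_le 0 D) as [?|HH]; auto; destruct HH as [HH|HH]; [assert (t < 0) by (destruct Ht'; auto; congruence); nra|congruence]).
        rewrite (Rabs_left1 t) by lra. rewrite (Rabs_pos_eq D) by lra. field. lra. }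
  replace (sg (t * D) * (k * / sqrt (Rabs f)) * t) with ((sg (t*D) * t) * k / sqrt (Rabs f))
    by (field; lra).
  rewrite Hsg, Habs. field. lra.
Qed.

Lemma cont_of_smooth1 (h : R -> R) a : smooth1_at h a -> continuous h a.
Proof. intros H. exact (ex_derive_continuous (V := R_NormedModule) h a (H 1%nat)). Qed.

Lemma cont3_1 (h : R -> R) i x y z : continuous h (cj i x y z) -> cont3 (fun x y z => h (cj i x y z)) x y z.
Proof.
  intros Hc eps He. destruct (cont_eps h _ Hc eps He) as [d [Hd H]].
  exists d. split; auto. intros x' y' z' H1 H2 H3. apply H.
  destruct i as [|[|i]]; simpl; auto.
Qed.

Theorem proposition2
  (U : R -> R -> R -> Prop) (E K P F L Q G M Rf : R -> R) (lam mu : R)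
  (t1 t2 t3 : fn3) :
  open3 U ->
  (exists x y z, U x y z) ->
  (forall x y z, U x y z ->
     smooth1_at E x /\ smooth1_at K x /\ smooth1_at P x /\
     smooth1_at F y /\ smooth1_at L y /\ smooth1_at Q y /\
     smooth1_at G z /\ smooth1_at M z /\ smooth1_at Rf z) ->
  (forall x y z, U x y z ->
     stDelta E K P F L Q G M Rf x y z <> 0 /\
     den1 E K P F L Q G M Rf x y z <> 0 /\
     den2 E K P F L Q G M Rf x y z <> 0 /\
     den3 E K P F L Q G M Rf x y z <> 0) ->
  (forall x y z, U x y z ->
     four_distinct_points
       (fun v => I2q E K P F L Q G M Rf x y z v - lam * gq E K P F L Q G M Rf x y z v)
       (fun v => I3q E K P F L Q G M Rf x y z v - mu * gq E K P F L Q G M Rf x y z v)) ->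
  (* (t1,t2,t3) spans one of the four direction fields tau_i *)
  smooth3_on U t1 -> smooth3_on U t2 -> smooth3_on U t3 ->
  (forall x y z, U x y z ->
     proj_sol
       (fun v => I2q E K P F L Q G M Rf x y z v - lam * gq E K P F L Q G M Rf x y z v)
       (fun v => I3q E K P F L Q G M Rf x y z v - mu * gq E K P F L Q G M Rf x y z v)
       (Vec3 (t1 x y z) (t2 x y z) (t3 x y z))) ->
  rank_ge U [fol_x; fol_y; fol_z; line_fol t1 t2 t3] 2.
Proof.
  intros HU Hne Hsm Hnz H4 St1 St2 St3 Ht.
  set (f1 := fun x => E x + lam * K x + mu * P x).
  set (f2 := fun y => F y + lam * L y + mu * Q y).
  set (f3 := fun z => G z + lam * M z + mu * Rf z).
  assert (PM : forall x y z, U x y z ->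
    f1 x <> 0 /\ f2 y <> 0 /\ f3 z <> 0 /\ t1 x y z <> 0 /\ t2 x y z <> 0 /\ t3 x y z <> 0 /\
    exists c, t1 x y z ^ 2 = c * (den1 E K P F L Q G M Rf x y z)^2 * Rabs (f1 x) /\
              t2 x y z ^ 2 = c * (den2 E K P F L Q G M Rf x y z)^2 * Rabs (f2 y) /\
              t3 x y z ^ 2 = c * (den3 E K P F L Q G M Rf x y z)^2 * Rabs (f3 z)).
  { intros x y z Hu. destruct (Hnz x y z Hu) as [N0 [N1 [N2 N3]]].
    exact (point_main (E x) (K x) (P x) (F y) (L y) (Q y) (G z) (M z) (Rf z) lam mu N0 N1 N2 N3
             (Vec3 (t1 x y z) (t2 x y z) (t3 x y z)) (H4 x y z Hu) (Ht x y z Hu)). }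
  set (Ux := fun x => exists y z, U x y z).
  set (Uy := fun y => exists x z, U x y z).
  set (Uz := fun z => exists x y, U x y z).
  assert (OX : open1 Ux).
  { intros x [y [z Hu]]. destruct (HU x y z Hu) as [d [Hd H]]. exists d. split; auto.
    intros x' Hx. exists y, z. apply H; auto; apply R0d; auto. }
  assert (OY : open1 Uy).
  { intros y [x [z Hu]]. destruct (HU x y z Hu) as [d [Hd H]]. exists d. split; auto.
    intros y' Hy. exists x, z. apply H; auto; apply R0d; auto. }
  assert (OZ : open1 Uz).
  { intros z [x [y Hu]]. destruct (HU x y z Hu) as [d [Hd H]]. exists d. split; auto.
    intros z' Hz. exists x, y. apply H; auto; apply R0d; auto. }
  assert (CX : forall h, (forall x y z, U x y z -> smooth1_at h x) -> forall n, Cn Ux n h).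
  { intros h Hh n. apply Cn_of_smooth. intros x [y [z Hu]]. eauto. }
  assert (CY : forall h, (forall x y z, U x y z -> smooth1_at h y) -> forall n, Cn Uy n h).
  { intros h Hh n. apply Cn_of_smooth. intros y [x [z Hu]]. eauto. }
  assert (CZ : forall h, (forall x y z, U x y z -> smooth1_at h z) -> forall n, Cn Uz n h).
  { intros h Hh n. apply Cn_of_smooth. intros z [x [y Hu]]. eauto. }
  assert (Cf : forall V (a b c : R -> R), open1 V -> (forall n, Cn V n a) -> (forall n, Cn V n b) ->
      (forall n, Cn V n c) -> (forall n, Cn V n (fun x => a x + lam * b x + mu * c x))).
  { intros V a b c HV Ha Hb Hc n. apply (Cn_plus V n HV (fun x => a x + lam * b x) (fun x => mu * c x)).
    - apply (Cn_plus V n HV a (fun x => lam * b x)); auto.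
      apply (Cn_mult V n HV (fun _ => lam) b); auto. apply Cn_const; auto.
    - apply (Cn_mult V n HV (fun _ => mu) c); auto. apply Cn_const; auto. }
  assert (Ch : forall V (k f : R -> R), open1 V -> (forall n, Cn V n k) -> (forall n, Cn V n f) ->
      (forall x, V x -> f x <> 0) -> forall x, V x -> smooth1_at (fun x => k x * / sqrt (Rabs (f x))) x).
  { intros V k f HV Hk Hf Hf0. apply smooth_of_Cn. intros n.
    apply (Cn_mult V n HV k (fun x => / sqrt (Rabs (f x)))); auto. apply Cn_isqrt; auto. }
  assert (Cf1 : forall n, Cn Ux n f1) by (apply Cf; auto; apply CX; intros x y z Hu; apply Hsm in Hu; tauto).
  assert (Cf2 : forall n, Cn Uy n f2) by (apply Cf; auto; apply CY; intros x y z Hu; apply Hsm in Hu; tauto).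
  assert (Cf3 : forall n, Cn Uz n f3) by (apply Cf; auto; apply CZ; intros x y z Hu; apply Hsm in Hu; tauto).
  assert (NZ1 : forall x, Ux x -> f1 x <> 0) by (intros x [y [z Hu]]; apply (PM x y z Hu)).
  assert (NZ2 : forall y, Uy y -> f2 y <> 0) by (intros y [x [z Hu]]; apply (PM x y z Hu)).
  assert (NZ3 : forall z, Uz z -> f3 z <> 0) by (intros z [x [y Hu]]; apply (PM x y z Hu)).
  set (hK := fun x => K x * / sqrt (Rabs (f1 x))).
  set (hP := fun x => P x * / sqrt (Rabs (f1 x))).
  set (hL := fun y => L y * / sqrt (Rabs (f2 y))).
  set (hQ := fun y => Q y * / sqrt (Rabs (f2 y))).
  set (hM := fun z => M z * / sqrt (Rabs (f3 z))).
  set (hR := fun z => Rf z * / sqrt (Rabs (f3 z))).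
  assert (SK : forall x y z, U x y z -> smooth1_at hK (cj 0 x y z)).
  { intros x y z Hu. apply (Ch Ux); auto. apply CX; intros ? ? ? H; apply Hsm in H; tauto. exists y, z; auto. }
  assert (SP : forall x y z, U x y z -> smooth1_at hP (cj 0 x y z)).
  { intros x y z Hu. apply (Ch Ux); auto. apply CX; intros ? ? ? H; apply Hsm in H; tauto. exists y, z; auto. }
  assert (SL : forall x y z, U x y z -> smooth1_at hL (cj 1 x y z)).
  { intros x y z Hu. apply (Ch Uy); auto. apply CY; intros ? ? ? H; apply Hsm in H; tauto. exists x, z; auto. }
  assert (SQ : forall x y z, U x y z -> smooth1_at hQ (cj 1 x y z)).
  { intros x y z Hu. apply (Ch Uy); auto. apply CY; intros ? ? ? H; apply Hsm in H; tauto. exists x, z; auto. }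
  assert (SM : forall x y z, U x y z -> smooth1_at hM (cj 2 x y z)).
  { intros x y z Hu. apply (Ch Uz); auto. apply CZ; intros ? ? ? H; apply Hsm in H; tauto. exists x, y; auto. }
  assert (SR : forall x y z, U x y z -> smooth1_at hR (cj 2 x y z)).
  { intros x y z Hu. apply (Ch Uz); auto. apply CZ; intros ? ? ? H; apply Hsm in H; tauto. exists x, y; auto. }
  assert (Ct : forall t, smooth3_on U t -> forall x y z, U x y z -> cont3 t x y z).
  { intros t St x y z Hu. exact (proj1 (St [] x y z Hu)). }
  assert (C1v : forall (h : R -> R) i, (forall x y z, U x y z -> smooth1_at h (cj i x y z)) ->
      forall x y z, U x y z -> cont3 (fun x y z => h (cj i x y z)) x y z).
  { intros h i Hh x y z Hu. apply cont3_1. apply cont_of_smooth1. auto. }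
  set (s1 := fun x y z => sg (t1 x y z * den1 E K P F L Q G M Rf x y z)).
  set (s2 := fun x y z => sg (t2 x y z * den2 E K P F L Q G M Rf x y z)).
  set (s3 := fun x y z => sg (t3 x y z * den3 E K P F L Q G M Rf x y z)).
  assert (LC1 : locconst U s1).
  { apply sg_locconst; auto. intros x y z Hu. split.
    - apply cont3_mult; [apply Ct; auto|]. unfold den1.
      apply cont3_minus; apply cont3_mult.
      + apply (C1v L 1%nat); auto. intros ? ? ? H; apply Hsm in H; simpl; tauto.
      + apply (C1v Rf 2%nat); auto. intros ? ? ? H; apply Hsm in H; simpl; tauto.
      + apply (C1v M 2%nat); auto. intros ? ? ? H; apply Hsm in H; simpl; tauto.
      + apply (C1v Q 1%nat); auto. intros ? ? ? H; apply Hsm in H; simpl; tauto.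
    - apply Rmult_integral_contrapositive_currified. apply (PM x y z Hu). apply (Hnz x y z Hu). }
  assert (LC2 : locconst U s2).
  { apply sg_locconst; auto. intros x y z Hu. split.
    - apply cont3_mult; [apply Ct; auto|]. unfold den2.
      apply cont3_minus; apply cont3_mult.
      + apply (C1v M 2%nat); auto. intros ? ? ? H; apply Hsm in H; simpl; tauto.
      + apply (C1v P 0%nat); auto. intros ? ? ? H; apply Hsm in H; simpl; tauto.
      + apply (C1v K 0%nat); auto. intros ? ? ? H; apply Hsm in H; simpl; tauto.
      + apply (C1v Rf 2%nat); auto. intros ? ? ? H; apply Hsm in H; simpl; tauto.
    - apply Rmult_integral_contrapositive_currified. apply (PM x y z Hu). apply (Hnz x y z Hu). }
  assert (LC3 : locconst U s3).
  { apply sg_locconst; auto. intros x y z Hu. split.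
    - apply cont3_mult; [apply Ct; auto|]. unfold den3.
      apply cont3_minus; apply cont3_mult.
      + apply (C1v K 0%nat); auto. intros ? ? ? H; apply Hsm in H; simpl; tauto.
      + apply (C1v Q 1%nat); auto. intros ? ? ? H; apply Hsm in H; simpl; tauto.
      + apply (C1v L 1%nat); auto. intros ? ? ? H; apply Hsm in H; simpl; tauto.
      + apply (C1v P 0%nat); auto. intros ? ? ? H; apply Hsm in H; simpl; tauto.
    - apply Rmult_integral_contrapositive_currified. apply (PM x y z Hu). apply (Hnz x y z Hu). }
  assert (REL : forall hA hB hC : R -> R,
    (forall x y z, U x y z -> smooth1_at hA (cj 0 x y z)) ->
    (forall x y z, U x y z -> smooth1_at hB (cj 1 x y z)) ->
    (forall x y z, U x y z -> smooth1_at hC (cj 2 x y z)) ->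
    (forall x y z, U x y z -> s1 x y z * hA (cj 0 x y z) * t1 x y z + s2 x y z * hB (cj 1 x y z) * t2 x y z
                              + s3 x y z * hC (cj 2 x y z) * t3 x y z = 0) ->
    abelian_relation U [fol_x; fol_y; fol_z; line_fol t1 t2 t3]
      [OneForm (fun x y z => s1 x y z * hA (cj 0 x y z)) zf zf;
       OneForm zf (fun x y z => s2 x y z * hB (cj 1 x y z)) zf;
       OneForm zf zf (fun x y z => s3 x y z * hC (cj 2 x y z));
       OneForm (fun x y z => (fun x y z => - s1 x y z) x y z * hA (cj 0 x y z))
               (fun x y z => (fun x y z => - s2 x y z) x y z * hB (cj 1 x y z))
               (fun x y z => (fun x y z => - s3 x y z) x y z * hC (cj 2 x y z))]).
  { intros hA hB hC SA SB SC HR.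
    pose proof (locconst_opp _ _ LC1) as LC1'.
    pose proof (locconst_opp _ _ LC2) as LC2'.
    pose proof (locconst_opp _ _ LC3) as LC3'.
    apply rel_lemma.
    - exact (sep_smooth U 0 hA s1 LC1 SA).
    - exact (sep_smooth U 1 hB s2 LC2 SB).
    - exact (sep_smooth U 2 hC s3 LC3 SC).
    - exact (sep_smooth U 0 hA _ LC1' SA).
    - exact (sep_smooth U 1 hB _ LC2' SB).
    - exact (sep_smooth U 2 hC _ LC3' SC).
    - intros x y z Hu. repeat split; [apply (sep_pd0 U 0 hA s1) | apply (sep_pd0 U 0 hA s1)
        | apply (sep_pd0 U 0 hA (fun x y z => - s1 x y z)) | apply (sep_pd0 U 0 hA (fun x y z => - s1 x y z))];
        auto; discriminate.
    - intros x y z Hu. repeat split; [apply (sep_pd0 U 1 hB s2) | apply (sep_pd0 U 1 hB s2)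
        | apply (sep_pd0 U 1 hB (fun x y z => - s2 x y z)) | apply (sep_pd0 U 1 hB (fun x y z => - s2 x y z))];
        auto; discriminate.
    - intros x y z Hu. repeat split; [apply (sep_pd0 U 2 hC s3) | apply (sep_pd0 U 2 hC s3)
        | apply (sep_pd0 U 2 hC (fun x y z => - s3 x y z)) | apply (sep_pd0 U 2 hC (fun x y z => - s3 x y z))];
        auto; discriminate.
    - intros x y z Hu. repeat split; ring.
    - intros x y z Hu. rewrite <- (HR x y z Hu). ring. }
  assert (ROK : forall (hA hB hC : R -> R) (kA kB kC : R -> R),
    (forall x, hA x = kA x * / sqrt (Rabs (f1 x))) ->
    (forall y, hB y = kB y * / sqrt (Rabs (f2 y))) ->
    (forall z, hC z = kC z * / sqrt (Rabs (f3 z))) ->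
    (forall x y z, kA x * den1 E K P F L Q G M Rf x y z + kB y * den2 E K P F L Q G M Rf x y z
                   + kC z * den3 E K P F L Q G M Rf x y z = 0) ->
    forall x y z, U x y z -> s1 x y z * hA (cj 0 x y z) * t1 x y z + s2 x y z * hB (cj 1 x y z) * t2 x y z
                              + s3 x y z * hC (cj 2 x y z) * t3 x y z = 0).
  { intros hA hB hC kA kB kC EA EB EC Id x y z Hu.
    destruct (PM x y z Hu) as [N1 [N2 [N3 [T1 [T2 [T3 [c [E1 [E2 E3]]]]]]]]].
    destruct (Hnz x y z Hu) as [_ [D1 [D2 D3]]].
    unfold cj. rewrite EA, EB, EC. unfold s1, s2, s3.
    rewrite (key_id _ _ _ c _ T1 D1 N1 E1), (key_id _ _ _ c _ T2 D2 N2 E2), (key_id _ _ _ c _ T3 D3 N3 E3).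
    replace (kA x * den1 E K P F L Q G M Rf x y z * sqrt c + kB y * den2 E K P F L Q G M Rf x y z * sqrt c +
             kC z * den3 E K P F L Q G M Rf x y z * sqrt c)
      with (sqrt c * (kA x * den1 E K P F L Q G M Rf x y z + kB y * den2 E K P F L Q G M Rf x y z
                   + kC z * den3 E K P F L Q G M Rf x y z)) by ring.
    rewrite Id. ring. }
  exists [[OneForm (fun x y z => s1 x y z * hK (cj 0 x y z)) zf zf;
       OneForm zf (fun x y z => s2 x y z * hL (cj 1 x y z)) zf;
       OneForm zf zf (fun x y z => s3 x y z * hM (cj 2 x y z));
       OneForm (fun x y z => (fun x y z => - s1 x y z) x y z * hK (cj 0 x y z))
               (fun x y z => (fun x y z => - s2 x y z) x y z * hL (cj 1 x y z))
               (fun x y z => (fun x y z => - s3 x y z) x y z * hM (cj 2 x y z))];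
     [OneForm (fun x y z => s1 x y z * hP (cj 0 x y z)) zf zf;
       OneForm zf (fun x y z => s2 x y z * hQ (cj 1 x y z)) zf;
       OneForm zf zf (fun x y z => s3 x y z * hR (cj 2 x y z));
       OneForm (fun x y z => (fun x y z => - s1 x y z) x y z * hP (cj 0 x y z))
               (fun x y z => (fun x y z => - s2 x y z) x y z * hQ (cj 1 x y z))
               (fun x y z => (fun x y z => - s3 x y z) x y z * hR (cj 2 x y z))]].
  split; [reflexivity|]. split.
  { constructor; [|constructor; [|constructor]].
    - apply REL; auto. apply (ROK hK hL hM K L M); try reflexivity.
      intros x y z. unfold den1, den2, den3. ring.
    - apply REL; auto. apply (ROK hP hQ hR P Q Rf); try reflexivity.
      intros x y z. unfold den1, den2, den3. ring. }
  intros cs Hlen Hlc. destruct cs as [|c1 [|c2 [|c3 cs]]]; simpl in Hlen; try discriminate.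
  destruct Hne as [x [y [z Hu]]].
  pose proof (Hlc 0%nat x y z (Vec3 1 0 0) Hu) as L1.
  pose proof (Hlc 1%nat x y z (Vec3 0 1 0) Hu) as L2.
  pose proof (Hlc 2%nat x y z (Vec3 0 0 1) Hu) as L3.
  simpl in L1, L2, L3. unfold form_at, zf, cj, hK, hP, hL, hQ, hM, hR in L1, L2, L3. simpl in L1, L2, L3.
  destruct (PM x y z Hu) as [N1 [N2 [N3 _]]].
  assert (Wnz : forall sv fv, sv <> 0 -> fv <> 0 -> sv * / sqrt (Rabs fv) <> 0).
  { intros sv fv Hs Hf. apply Rmult_integral_contrapositive_currified; auto.
    apply Rinv_neq_0_compat. apply Rgt_not_eq. apply sqrt_lt_R0. apply Rabs_pos_lt; auto. }
  assert (W1 : c1 * K x + c2 * P x = 0).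
  { apply (Rmult_eq_reg_l (s1 x y z * / sqrt (Rabs (f1 x)))); [|apply Wnz; auto; apply sg_nz].
    rewrite Rmult_0_r. eapply eq_trans; [|exact L1]. ring. }
  assert (W2 : c1 * L y + c2 * Q y = 0).
  { apply (Rmult_eq_reg_l (s2 x y z * / sqrt (Rabs (f2 y)))); [|apply Wnz; auto; apply sg_nz].
    rewrite Rmult_0_r. eapply eq_trans; [|exact L2]. ring. }
  assert (W3 : c1 * M z + c2 * Rf z = 0).
  { apply (Rmult_eq_reg_l (s3 x y z * / sqrt (Rabs (f3 z)))); [|apply Wnz; auto; apply sg_nz].
    rewrite Rmult_0_r. eapply eq_trans; [|exact L3]. ring. }
  destruct (Hnz x y z Hu) as [HD _].
  assert (Z1 : c1 * stDelta E K P F L Q G M Rf x y z = 0).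
  { replace (c1 * stDelta E K P F L Q G M Rf x y z) with
      ((G z*Q y - F y*Rf z)*(c1*K x + c2*P x) + (E x*Rf z - G z*P x)*(c1*L y + c2*Q y)
       + (F y*P x - E x*Q y)*(c1*M z + c2*Rf z)) by (unfold stDelta; ring).
    rewrite W1, W2, W3. ring. }
  assert (Z2 : c2 * stDelta E K P F L Q G M Rf x y z = 0).
  { replace (c2 * stDelta E K P F L Q G M Rf x y z) with
      ((F y*M z - G z*L y)*(c1*K x + c2*P x) + (G z*K x - E x*M z)*(c1*L y + c2*Q y)
       + (E x*L y - F y*K x)*(c1*M z + c2*Rf z)) by (unfold stDelta; ring).
    rewrite W1, W2, W3. ring. }
  apply Rmult_integral in Z1. apply Rmult_integral in Z2.
  constructor; [destruct Z1; tauto|constructor; [destruct Z2; tauto|constructor]].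
Qed.
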